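(* Let $G$ be a graph on $n$ vertices ($n$ even and sufficiently large) in which every vertex has at least $n-\sqrt{n}/4000$ neighbors. If a perfect matching of $G$ is chosen uniformly at random, then for any edge $e$ the probability that $e$ is contained in the matching is at most $\frac{1}{n-\sqrt{n}/1000}$. *)

(* Defs.v *)
From HB Require Import structures.
From mathcomp Require Import all_boot all_order all_algebra all_field.
Set Implicit Arguments. Unset Strict Implicit. Unset Printing Implicit Defensive.
Import Order.TTheory GRing.Theory Num.Theory.

Definition simple_graph (T : finType) (g : rel T) : Prop :=
  symmetric g /\ irreflexive g.

Definition degree (T : finType) (g : rel T) (x : T) : nat := #|[set y | g x y]|.

Definition is_perfect_matching (T : finType) (g : rel T) (M : {set {set T}}) : bool :=
  [forall A in M, [exists x, exists y, [&& A == [set x; y], x != y & g x y]]]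
  && partition M [set: T].

Definition perfect_matchings (T : finType) (g : rel T) : {set {set {set T}}} :=
  [set M | is_perfect_matching g M].

Local Open Scope ring_scope.
Definition prob_edge_in_pm (T : finType) (g : rel T) (x y : T) : algC :=
  (#|[set M in perfect_matchings g | [set x; y] \in M]|)%:R
  / (#|perfect_matchings g|)%:R.

(* Main.v *)
Require Import Defs.
From HB Require Import structures.
From mathcomp Require Import all_boot all_order all_algebra all_field.
From mathcomp Require Import zify ring.
Import Order.TTheory GRing.Theory Num.Theory.

Set Implicit Arguments. Unset Strict Implicit. Unset Printing Implicit Defensive.

Section PM.
Variables (T : finType) (g : rel T).
Hypothesis gsym : symmetric g.
Hypothesis girr : irreflexive g.

Definition valid (m : {ffun T -> T}) :=
  [forall z, [&& m (m z) == z, m z != z & g z (m z)]].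

Definition blocks (m : {ffun T -> T}) : {set {set T}} := [set [set z; m z] | z : T].

Lemma validP m : valid m ->
  (forall z, m (m z) = z) /\ (forall z, m z != z) /\ (forall z, g z (m z)).
Proof.
move/forallP=> H; split; [|split] => z; by case/and3P: (H z) => /eqP.
Qed.

Lemma set2_eq (a b z w : T) : z \in [set a; b] -> w \in [set a; b] -> z != w ->
  [set a; b] = [set z; w].
Proof.
case/set2P=> -> /set2P [] -> //; rewrite ?eqxx //.
by move=> _; rewrite setUC.
Qed.

Lemma blockE m a w : valid m -> w \in [set a; m a] -> [set a; m a] = [set w; m w].
Proof.
case/validP=> inv [fp _] /set2P [] -> //.
by rewrite inv setUC.
Qed.

Lemma blocks_pm m : valid m -> is_perfect_matching g (blocks m).
Proof.
move=> vm; have [inv [fp ed]] := validP vm.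
apply/andP; split.
  apply/forallP=> A; apply/implyP=> /imsetP [z _ ->].
  by apply/existsP; exists z; apply/existsP; exists (m z); rewrite eqxx eq_sym fp ed.
apply/and3P; split.
- apply/eqP/setP=> w; rewrite in_setT; apply/bigcupP; exists [set w; m w].
    by apply/imsetP; exists w.
  by rewrite set21.
- apply/trivIsetP=> A B /imsetP [a _ ->] /imsetP [b _ ->] neq.
  rewrite -setI_eq0; apply/eqP/setP=> w; rewrite in_set0 in_setI.
  apply/negbTE/negP=> /andP [ha hb].
  by move: neq; rewrite (blockE vm ha) (blockE vm hb) eqxx.
- apply/negP=> /imsetP [a _ H].
  by have := set21 a (m a); rewrite -H in_set0.
Qed.

Lemma blocks_inj m1 m2 : valid m1 -> valid m2 -> blocks m1 = blocks m2 -> m1 = m2.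
Proof.
move=> v1 v2 E; have [i1 [f1 e1]] := validP v1.
apply/ffunP=> z.
have : [set z; m1 z] \in blocks m2 by rewrite -E; apply/imsetP; exists z.
case/imsetP=> w _ H.
have hz : z \in [set w; m2 w] by rewrite -H set21.
rewrite (blockE v2 hz) in H.
have : m1 z \in [set z; m2 z] by rewrite -H set22.
by case/set2P=> // h; move: (f1 z); rewrite h eqxx.
Qed.

Lemma blocks_mem m x y : valid m -> x != y -> ([set x; y] \in blocks m) = (m x == y).
Proof.
move=> vm nxy; have [i [f e]] := validP vm.
apply/idP/idP.
  case/imsetP=> w _ H.
  have hx : x \in [set w; m w] by rewrite -H set21.
  rewrite (blockE vm hx) in H.
  have : y \in [set x; m x] by rewrite -H set22.
  by case/set2P=> [h|->//]; move: nxy; rewrite h eqxx.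
by move/eqP=> <-; apply/imsetP; exists x.
Qed.

Lemma pm_blocks M : is_perfect_matching g M -> exists2 m, valid m & M = blocks m.
Proof.
case/andP=> /forallP hb /and3P [/eqP cov triv n0].
have inc z : z \in cover M by rewrite cov in_setT.
have K z : exists a b, [/\ pblock M z = [set a; b], a != b & g a b].
  have := hb (pblock M z); rewrite (pblock_mem (inc z)) /=.
  case/existsP=> a /existsP [b /and3P [/eqP -> ab gab]]; by exists a, b.
pose m := [ffun z => odflt z [pick w in pblock M z | w != z]].
have M1 z : [/\ m z \in pblock M z, m z != z & pblock M z = [set z; m z]].
  have [a [b [E ab gab]]] := K z.
  have hz : z \in pblock M z by rewrite mem_pblock.
  rewrite /m ffunE; case: pickP => [w /andP [hw wz] | H] /=.
    by split=> //; rewrite eq_sym in wz; rewrite E (set2_eq _ _ wz) // -E.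
  exfalso; move: hz; rewrite E => /set2P [] Ez.
    by have := H b; rewrite E set22 /= Ez eq_sym ab.
  by have := H a; rewrite E set21 /= Ez ab.
have same z : pblock M (m z) = pblock M z.
  have [h1 _ _] := M1 z; exact: def_pblock triv (pblock_mem (inc z)) h1.
exists m.
  apply/forallP=> z; have [h1 h2 h3] := M1 z.
  have [h1' h2' h3'] := M1 (m z).
  apply/and3P; split => //.
    rewrite same h3 in h1'; case/set2P: h1' => [->//|h]; by rewrite h eqxx in h2'.
  have [a [b [E ab gab]]] := K z.
  have hz : z \in [set a; b] by rewrite -E mem_pblock.
  move: h1 h2; rewrite E.
  case/set2P: hz => -> /set2P [] -> /negP; rewrite ?eqxx // => _;
    first [exact: gab | by rewrite gsym].
apply/setP=> A; apply/idP/idP.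
  move=> hA; have: A != set0 by apply: contraNneq n0 => <-.
  case/set0Pn=> z hz; apply/imsetP; exists z => //.
  have [_ _ <-] := M1 z; by rewrite (def_pblock triv hA hz).
case/imsetP=> z _ ->; have [_ _ <-] := M1 z; exact: pblock_mem.
Qed.

End PM.

Section Count.
Variables (T : finType) (g : rel T).
Hypothesis gsym : symmetric g.
Hypothesis girr : irreflexive g.

Lemma card_sel (P : pred {set {set T}}) :
  #|[set M in perfect_matchings g | P M]| = #|[set m | valid g m && P (blocks m)]|.
Proof.
have inj : {in [set m | valid g m && P (blocks m)] &, injective (@blocks T)}.
  move=> m1 m2; rewrite !inE => /andP [v1 _] /andP [v2 _]. exact: (blocks_inj v1 v2).
rewrite -(card_in_imset inj).
apply: eq_card => M; rewrite !inE; apply/idP/idP.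
  case/andP=> hM hP; have [m vm E] := pm_blocks gsym hM.
  by apply/imsetP; exists m; rewrite // inE vm -E.
case/imsetP=> m; rewrite inE => /andP [vm hP] ->.
by rewrite hP andbT blocks_pm.
Qed.

Variables (x y : T).
Hypothesis gxy : g x y.

Definition sw (m : {ffun T -> T}) (u : T) : {ffun T -> T} :=
  [ffun z => if z == x then u else if z == u then x else if z == y then m u
             else if z == m u then y else m z].

Definition U (m : {ffun T -> T}) := [set u | [&& u != x, u != y, g x u & g y (m u)]].

Lemma sw_facts m u : valid g m -> m x = y -> u \in U m ->
  [/\ sw m u x = u, sw m u u = x, sw m u y = m u, sw m u (m u) = y &
   forall z, z != x -> z != u -> z != y -> z != m u -> sw m u z = m z].
Proof.
move=> vm mx; have [inv [fp ed]] := validP vm.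
rewrite inE => /and4P [ux uy gxu gyv].
have xy : x != y by apply: contraTneq gxy => ->; rewrite girr.
have my : m y = x by rewrite -mx inv.
have vx : m u != x by apply: contraNneq uy => h; rewrite -mx -h inv.
have vy : m u != y by apply: contraNneq ux => h; rewrite -my -h inv.
have vu : m u != u by exact: fp.
split.
- by rewrite ffunE eqxx.
- by rewrite ffunE (negbTE ux) eqxx.
- by rewrite ffunE eq_sym (negbTE xy) eq_sym (negbTE uy) eqxx.
- by rewrite ffunE (negbTE vx) (negbTE vu) (negbTE vy) eqxx.
- by move=> z /negbTE zx /negbTE zu /negbTE zy /negbTE zv; rewrite ffunE zx zu zy zv.
Qed.

Lemma sw_valid m u : valid g m -> m x = y -> u \in U m -> valid g (sw m u).
Proof.
move=> vm mx hu; have [inv [fp ed]] := validP vm.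
have [Sx Su Sy Sv So] := sw_facts vm mx hu.
move: hu; rewrite inE => /and4P [ux uy gxu gyv].
have xy : x != y by apply: contraTneq gxy => ->; rewrite girr.
have my : m y = x by rewrite -mx inv.
have vx : m u != x by apply: contraNneq uy => h; rewrite -mx -h inv.
have vy : m u != y by apply: contraNneq ux => h; rewrite -my -h inv.
have vu : m u != u by exact: fp.
apply/forallP=> z.
case: (z =P x) => [->|zx]; first by rewrite Sx Su eqxx ux gxu.
case: (z =P u) => [->|zu]; first by rewrite Su Sx eqxx eq_sym ux gsym gxu.
case: (z =P y) => [->|zy]; first by rewrite Sy Sv eqxx vy gyv.
case: (z =P m u) => [->|zv]; first by rewrite Sv Sy eqxx eq_sym vy gsym gyv.
move/eqP: zx => zx; move/eqP: zu => zu; move/eqP: zy => zy; move/eqP: zv => zv.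
rewrite (So z) //.
have wx : m z != x by apply: contraNneq zy => h; rewrite -mx -h inv.
have wu : m z != u by apply: contraNneq zv => h; rewrite -h inv.
have wy : m z != y by apply: contraNneq zx => h; rewrite -my -h inv.
have wv : m z != m u by apply: contraNneq zu => h; rewrite -(inv z) h inv.
by rewrite So // inv eqxx fp ed.
Qed.

Lemma sw_inj m1 u1 m2 u2 : valid g m1 -> m1 x = y -> u1 \in U m1 ->
  valid g m2 -> m2 x = y -> u2 \in U m2 -> sw m1 u1 = sw m2 u2 -> m1 = m2 /\ u1 = u2.
Proof.
move=> v1 mx1 h1 v2 mx2 h2 E.
have [i1 _] := validP v1; have [i2 _] := validP v2.
have [Sx1 Su1 Sy1 Sv1 So1] := sw_facts v1 mx1 h1.
have [Sx2 Su2 Sy2 Sv2 So2] := sw_facts v2 mx2 h2.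
have eu : u1 = u2 by rewrite -Sx1 E Sx2.
subst u2; split=> //.
have ev : m1 u1 = m2 u1 by rewrite -Sy1 E Sy2.
have my1 : m1 y = x by rewrite -mx1 i1.
have my2 : m2 y = x by rewrite -mx2 i2.
apply/ffunP=> z.
case: (z =P x) => [->|/eqP zx]; first by rewrite mx1 mx2.
case: (z =P y) => [->|/eqP zy]; first by rewrite my1 my2.
case: (z =P u1) => [->|/eqP zu]; first by [].
case: (z =P m1 u1) => [->|/eqP zv]; first by rewrite i1 ev i2.
have zv2 : z != m2 u1 by rewrite -ev.
by rewrite -So1 // E So2.
Qed.


Lemma U_bound m : valid g m -> m x = y ->
  (degree g x + degree g y <= #|T| + #|U m|)%N.
Proof.
move=> vm mx; have [inv [fp ed]] := validP vm.
set NX := ~: [set u | g x u].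
set PY := m @^-1: (~: [set u | g y u]).
have hNX : #|NX| = (#|T| - degree g x)%N.
  by rewrite /degree -(cardsC [set u | g x u]) addKn.
have hPY : #|PY| = (#|T| - degree g y)%N.
  rewrite card_preimset; last exact: (can_inj inv).
  by rewrite /degree -(cardsC [set u | g y u]) addKn.
have sub : ~: U m \subset y |: (NX :|: PY).
  apply/subsetP=> u; rewrite !inE.
  case hux: (u == x).
    by move/eqP: hux => ->; rewrite girr !orbT.
  by case: (u == y); case: (g x u); case: (g y (m u)).
have hI : (1 <= #|NX :&: PY|)%N.
  by apply/card_gt0P; exists x; rewrite !inE girr mx girr.
have c1 := subset_leq_card sub.
have c2 := cardsU1 y (NX :|: PY).
have c3 := cardsU NX PY.
have c4 := cardsC (U m).
have c5 : (degree g x <= #|T|)%N by rewrite /degree max_card.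
have c6 : (degree g y <= #|T|)%N by rewrite /degree max_card.
have c7 : (#|NX :&: PY| <= #|NX|)%N by apply: subset_leq_card; apply: subsetIl.
move: c2; case: (y \in NX :|: PY) => /= c2.
all: rewrite -!cardsT in hNX hPY c4 c5 c6 *; lia.
Qed.

Lemma count_main :
  (#|[set m | valid g m && (m x == y)]| * (degree g x + degree g y) <=
   #|[set m | valid g m && (m x == y)]| * #|T| + #|[set m | valid g m && ~~ (m x == y)]|)%N.
Proof.
set Ax := [set m | valid g m && (m x == y)].
set Bx := [set m | valid g m && ~~ (m x == y)].
set S := [set p : {ffun T -> T} * T | (p.1 \in Ax) && (p.2 \in U p.1)].
have injS : {in S &, injective (fun p => sw p.1 p.2)}.
  move=> [m1 u1] [m2 u2]; rewrite inE /= => /andP [hm1 h1].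
  rewrite inE /= => /andP [hm2 h2].
  move: hm1 hm2; rewrite !inE => /andP [v1 /eqP e1] /andP [v2 /eqP e2] E.
  by have [-> ->] := sw_inj v1 e1 h1 v2 e2 h2 E.
have cS : (#|S| <= #|Bx|)%N.
  rewrite -(card_in_imset injS); apply: subset_leq_card; apply/subsetP=> M.
  case/imsetP=> [[m u]]; rewrite inE /= => /andP [hm hu] ->.
  move: hm; rewrite inE => /andP [vm /eqP mx]; rewrite inE.
  rewrite sw_valid //=; have [Sx _ _ _ _] := sw_facts vm mx hu.
  by rewrite Sx; move: hu; rewrite inE => /and4P [_ -> _ _].
have sS : \sum_(m in Ax) #|U m| = #|S|.
  rewrite -sum1_card.
  rewrite (eq_bigl (fun p => (p.1 \in Ax) && (p.2 \in U p.1))); last by move=> p; rewrite inE.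
  rewrite -(pair_big_dep (fun m => m \in Ax) (fun m u => u \in U m) (fun _ _ => 1%N)).
  by apply: eq_bigr => m _; rewrite sum1_card.
have L : (\sum_(m in Ax) (degree g x + degree g y) <= \sum_(m in Ax) (#|T| + #|U m|))%N.
  apply: leq_sum => m; rewrite inE => /andP [vm /eqP mx].
  exact: U_bound.
rewrite -sum_nat_const; apply: leq_trans L _.
by rewrite big_split /= sum_nat_const sS leq_add2l.
Qed.

End Count.

Local Open Scope ring_scope.

Lemma alg_final (R : numFieldType) (n a b dx dy : nat) (s : R) :
  (0 < n)%N -> 0 <= s -> s ^+ 2 = n%:R ->
  (a * dx + a * dy <= a * n + b)%N ->
  n%:R - s / 4000 <= dx%:R -> n%:R - s / 4000 <= dy%:R ->
  a%:R / (a + b)%:R <= 1 / (n%:R - s / 1000).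
Proof.
move=> n0 s0 s2 K hx hy.
have n1 : 1 <= n%:R :> R by rewrite ler1n.
have sn : s <= n%:R.
  have h : 0 <= (s - 1) ^+ 2 by rewrite -realEsqr rpredB // ger0_real.
  rewrite sqrrB1 s2 in h.
  have h2 : s *+ 2 <= n%:R *+ 2.
    apply: le_trans (_ : n%:R + 1 <= _); last by rewrite mulr2n lerD2l.
    by rewrite -subr_ge0 (_ : _ - _ = n%:R - s *+ 2 + 1) //; ring.
  by rewrite ler_pMn2r in h2.
have hc : 0 < n%:R - s / 1000.
  rewrite subr_gt0 ltr_pdivrMr ?ltr0n //.
  apply: le_lt_trans sn _; rewrite ltr_pMr ?ltr1n //.
  by rewrite ltr0n.
have [->|a0] := eqVneq a 0%N.
  by rewrite mul0r divr_ge0 ?ler01 ?ltW.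
have ab0 : 0 < (a + b)%:R :> R by rewrite ltr0n addn_gt0 lt0n a0.
rewrite ler_pdivrMr // mul1r mulrC ler_pdivlMr //.
have Kr : (a * dx + a * dy)%:R <= (a * n + b)%:R :> R by rewrite ler_nat.
rewrite !natrD !natrM in Kr.
have hle : n%:R - s / 1000 <= dx%:R + dy%:R - n%:R + 1.
  rewrite -subr_ge0.
  have -> : dx%:R + dy%:R - n%:R + 1 - (n%:R - s / 1000) =
     (dx%:R - (n%:R - s / 4000)) + (dy%:R - (n%:R - s / 4000)) + (1 + s / 4000 + s / 4000) :> R.
    by field.
  apply: addr_ge0; [apply: addr_ge0; rewrite subr_ge0 //|].
  by apply: addr_ge0; [apply: addr_ge0; [exact: ler01|]|]; rewrite divr_ge0 ?ler0n.
apply: le_trans (_ : a%:R * (dx%:R + dy%:R - n%:R + 1) <= _).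
  by rewrite ler_wpM2l ?ler0n.
rewrite natrD -subr_ge0.
have -> : a%:R + b%:R - a%:R * (dx%:R + dy%:R - n%:R + 1) =
   (a%:R * n%:R + b%:R) - (a%:R * dx%:R + a%:R * dy%:R) :> R by ring.
by rewrite subr_ge0.
Qed.

Unset Implicit Arguments.

Theorem mainTheorem14 :
  exists N : nat, forall n : nat, (N <= n)%N -> ~~ odd n ->
  forall g : rel 'I_n, simple_graph g ->
  (forall v : 'I_n, (n%:R - sqrtC n%:R / 4000 <= (degree g v)%:R :> algC)) ->
  forall x y : 'I_n, g x y ->
  prob_edge_in_pm g x y <= 1 / (n%:R - sqrtC n%:R / 1000).
Proof.
exists 0%N => n _ _ g [gsym girr] hdeg x y gxy.
have n0 : (0 < n)%N := leq_ltn_trans (leq0n x) (ltn_ord x).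
have xy : x != y by apply: contraTneq gxy => ->; rewrite girr.
have eA : #|[set M in perfect_matchings g | [set x; y] \in M]| =
          #|[set m | valid g m && (m x == y)]|.
  rewrite (card_sel gsym (fun M => [set x; y] \in M)).
  apply: eq_card => m; rewrite !inE; case vm: (valid g m) => //=.
  exact: (blocks_mem vm xy).
have eF : #|perfect_matchings g| = (#|[set m | valid g m && (m x == y)]| +
                                   #|[set m | valid g m && ~~ (m x == y)]|)%N.
  transitivity #|[set M in perfect_matchings g | predT M]|.
    by apply: eq_card => M; rewrite !inE andbT.
  rewrite (card_sel gsym predT).
  rewrite -(cardsID [set m : {ffun 'I_n -> 'I_n} | m x == y] [set m | valid g m && predT (blocks m)]).
  congr addn; apply: eq_card => m; rewrite !inE /= andbT //.
  by rewrite andbC.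
have K := count_main gsym girr gxy.
rewrite card_ord mulnDr in K.
rewrite /prob_edge_in_pm eA eF.
apply: (alg_final (dx := degree g x) (dy := degree g y)) => //.
- by rewrite sqrtC_ge0 ler0n.
- by rewrite sqrtCK.
Qed.
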